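(* Let $p\in(0,1)$ and let $g$ be a function with $g(n)\ge 2$. Any procedure that, for every source string $s\in\{0,1\}^n$, recovers the $g(n)$-subword deck of $s$ with high probability from independent traces of $s$ must use $\Omega(np(1-p))$ traces.
   Context: Deletion channel: for $s\in\{0,1\}^n$ and deletion probability $p$, a trace of $s$ is obtained by deleting each bit of $s$ independently with probability $p$; distinct traces are independent. The $k$-subword deck of $s$ is the multiset of length-$k$ substrings $\{s[i:i+k-1]: i=1,\dots,n-k+1\}$. *)

(* Defs.v *)
From mathcomp Require Import all_boot all_order all_algebra.
From mathcomp Require Import reals.
Set Implicit Arguments. Unset Strict Implicit. Unset Printing Implicit Defensive.
Import Order.TTheory GRing.Theory Num.Theory.
Local Open Scope ring_scope.

(* The k-subword deck of s: the list (to be compared up to permutation, i.e.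
   as a multiset) of the length-k substrings s[i : i+k-1], i = 1..n-k+1. *)
Definition deck (k : nat) (s : seq bool) : seq (seq bool) :=
  [seq take k (drop i s) | i <- iota 0 (size s - k).+1].

(* Probability (under the deletion channel with deletion prob. p) of a given
   retention pattern m : {ffun 'I_n -> bool} (true = bit kept). *)
Definition mask_prob (R : realType) (p : R) (n : nat) (m : {ffun 'I_n -> bool}) : R :=
  \prod_(i < n) (if m i then 1 - p else p).

Definition trace_of (n : nat) (s : n.-tuple bool) (m : {ffun 'I_n -> bool}) : seq bool :=
  mask [seq m i | i <- enum 'I_n] s.

Definition success_prob (R : realType) (p : R) (n T k : nat)
    (A : seq (seq bool) -> seq (seq bool)) (s : n.-tuple bool) : R :=
  \sum_(M : {ffun 'I_T -> {ffun 'I_n -> bool}})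
     (\prod_(j < T) mask_prob p (M j)) *
     (perm_eq (A [seq trace_of s (M j) | j <- enum 'I_T]) (deck k s))%:R.

(* Main.v *)
Require Import Defs.
From mathcomp Require Import all_boot all_order all_algebra.
From mathcomp Require Import reals.
From mathcomp Require Import ring lra zify.
Import Order.TTheory GRing.Theory Num.Theory.
Set Implicit Arguments. Unset Strict Implicit. Unset Printing Implicit Defensive.


Lemma cnt_take j a b : count id (take j (nseq a false ++ nseq b true)) = minn (j - a) b.
Proof.
rewrite take_cat size_nseq; case: ltnP => h.
  rewrite take_nseq ?count_nseq /=; lia.
rewrite count_cat !count_nseq /= mul0n add0n.
case: (leqP (j - a) b) => h2.
  rewrite take_nseq // count_nseq /=; lia.
rewrite take_oversize ?size_nseq ?count_nseq /=; lia.
Qed.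

Lemma win (s : seq bool) i k :
  count id (take k (drop i s)) = count id (take (i + k) s) - count id (take i s).
Proof. by rewrite takeD count_cat addKn. Qed.

Lemma sum_strict N (f g : nat -> nat) i0 :
  (forall i, i < N -> g i <= f i) -> i0 < N -> g i0 < f i0 ->
  \sum_(i < N) g i < \sum_(i < N) f i.
Proof.
move=> hle h0 hlt.
rewrite (bigD1 (Ordinal h0)) //= [X in _ < X](bigD1 (Ordinal h0)) //=.
have : \sum_(i < N | i != Ordinal h0) g i <= \sum_(i < N | i != Ordinal h0) f i.
  by apply: leq_sum => i _; apply: hle.
by move=> H; rewrite -addSn leq_add.
Qed.

Lemma deck_neq n k a : 0 < k <= n -> a < n ->
  ~~ perm_eq (deck k (nseq a false ++ nseq (n - a) true))
             (deck k (nseq a.+1 false ++ nseq (n - a.+1) true)).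
Proof.
move=> hk ha; apply/negP => hp.
have E : \sum_(w <- deck k (nseq a false ++ nseq (n - a) true)) count id w =
         \sum_(w <- deck k (nseq a.+1 false ++ nseq (n - a.+1) true)) count id w
  := perm_big _ hp.
rewrite /deck !big_map !size_cat !size_nseq in E.
have e1 : (a + (n - a) = n)%N by lia.
have e2 : (a.+1 + (n - a.+1) = n)%N by lia.
rewrite e1 e2 in E.
have I : iota 0 (n - k).+1 = index_iota 0 (n - k).+1 by rewrite /index_iota subn0.
rewrite I !big_mkord in E.
move: E; under eq_bigr => i _ do rewrite win !cnt_take.
under [X in _ = X -> _]eq_bigr => i _ do rewrite win !cnt_take.
move=> E.
have : \sum_(i < (n - k).+1)
   (minn (i + k - a.+1) (n - a.+1) - minn (i - a.+1) (n - a.+1)) <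
       \sum_(i < (n - k).+1) (minn (i + k - a) (n - a) - minn (i - a) (n - a)).
  apply: (@sum_strict _ (fun i => minn (i + k - a) (n - a) - minn (i - a) (n - a))
     (fun i => minn (i + k - a.+1) (n - a.+1) - minn (i - a.+1) (n - a.+1)) (a.+1 - k)).
  - move=> i hi; lia.
  - lia.
  - lia.
by rewrite E ltnn.
Qed.

Local Open Scope ring_scope.

Section Gen.
Variable R : realType.

Lemma push (I O1 O2 : finType) (mu : O1 -> R) (f : O1 -> O2)
  (F : {ffun I -> O2} -> R) :
  \sum_(M : {ffun I -> O1}) (\prod_j mu (M j)) * F [ffun j => f (M j)] =
  \sum_(t : {ffun I -> O2}) (\prod_j (\sum_x mu x * (f x == t j)%:R)) * F t.
Proof.
under [RHS]eq_bigr => t _ do rewrite bigA_distr_bigA big_distrl /=.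
rewrite exchange_big /=; apply: eq_bigr => M _.
set fM := [ffun j => f (M j)].
rewrite (bigD1 fM) //= [X in _ + X]big1 ?addr0.
  congr (_ * _); apply: eq_bigr => j _; by rewrite ffunE eqxx mulr1.
move=> t /negbTE ht.
case: (pickP (fun j => fM j != t j)) => [j Hj | H].
  rewrite (bigD1 j) //=.
  have -> : (f (M j) == t j) = false by move: Hj; rewrite ffunE => /negbTE.
  by rewrite mulr0 !mul0r.
exfalso; move: ht; suff -> : fM = t by rewrite eqxx.
by apply/ffunP => j; move: (H j) => /negbFE/eqP.
Qed.

Lemma sum_prod_ffun (I O : finType) (h : O -> R) :
  \sum_(t : {ffun I -> O}) \prod_j h (t j) = (\sum_x h x) ^+ #|I|.
Proof.
have := bigA_distr_bigA (fun (_ : I) (x : O) => h x) => /= <-.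
by rewrite prodr_const.
Qed.

Lemma chi_bound (I O : finType) (v w : O -> R) (F : {ffun I -> O} -> R) :
  (forall x, 0 < w x) -> \sum_x w x = 1 -> \sum_x v x = 1 ->
  (forall t, 0 <= F t <= 1) ->
  (\sum_(t : {ffun I -> O}) (\prod_j v (t j)) * F t -
   \sum_(t : {ffun I -> O}) (\prod_j w (t j)) * F t) ^+ 2 <=
  (\sum_x v x ^+ 2 / w x) ^+ #|I| - 1.
Proof.
move=> wpos sw sv Fb.
pose V := fun t : {ffun I -> O} => \prod_(j : I) v (t j).
pose W := fun t : {ffun I -> O} => \prod_(j : I) w (t j).
rewrite -/(V _) -/(W _).
have Wpos t : 0 < W t by apply: prodr_gt0.
have SW : \sum_t W t = 1 by rewrite /W sum_prod_ffun sw expr1n.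
have SV : \sum_t V t = 1 by rewrite /V sum_prod_ffun sv expr1n.
have SVW : \sum_t V t ^+ 2 / W t = (\sum_x v x ^+ 2 / w x) ^+ #|I|.
  rewrite -sum_prod_ffun; apply: eq_bigr => t _.
  by rewrite /V /W -prodrXl -prodfV -big_split.
set B := \sum_t V t * F t - \sum_t W t * F t.
have EB : B = \sum_t (V t - W t) * F t.
  by rewrite /B -sumrB; apply: eq_bigr => t _; rewrite mulrBl.
set A := \sum_t (V t - W t) ^+ 2 / W t.
have EA : A = (\sum_x v x ^+ 2 / w x) ^+ #|I| - 1.
  have -> : A = \sum_t (V t ^+ 2 / W t - 2 * V t + W t).
    apply: eq_bigr => t _; have := Wpos t; rewrite lt0r => /andP [W0 _].
    by field.
  rewrite !big_split /= sumrN -mulr_sumr SV SVW SW; ring.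
set C := \sum_t W t * F t ^+ 2.
have C1 : C <= 1.
  rewrite -SW; apply: ler_sum => t _; have := Wpos t; have := Fb t.
  move=> /andP [F0 F1] W0; rewrite -[X in _ <= X]mulr1; apply: ler_wpM2l.
    exact: ltW.
  by rewrite expr2; apply: mulr_ile1.
have C0 : 0 <= C.
  by apply: sumr_ge0 => t _; apply: mulr_ge0; [exact: ltW (Wpos t)| exact: sqr_ge0].
have key : 0 <= A - 2 * B * (\sum_t (V t - W t) * F t) + B ^+ 2 * C.
  have -> : A - 2 * B * (\sum_t (V t - W t) * F t) + B ^+ 2 * C =
     \sum_t W t * ((V t - W t) / W t - B * F t) ^+ 2.
    rewrite /A /C !mulr_sumr -sumrB -big_split /=.
    apply: eq_bigr => t _; have := Wpos t; rewrite lt0r => /andP [W0 _].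
    by field.
  apply: sumr_ge0 => t _; apply: mulr_ge0; [exact: ltW (Wpos t)| exact: sqr_ge0].
rewrite -EB in key.
rewrite -EA; nra.
Qed.

Lemma bern (x : R) (T : nat) : 0 <= x -> x + 1 >= 0 ->
  (1 + x) ^+ T * (1 - T%:R * x) <= 1.
Proof.
move=> x0 _; elim: T => [|T IH]; first by rewrite expr0 mul0r subr0 mulr1.
have P : 0 <= (1 + x) ^+ T by apply: exprn_ge0; lra.
rewrite exprSr -mulrA.
apply: le_trans IH; apply: ler_wpM2l => //.
rewrite -natr1; have T0 : 0 <= T%:R :> R by apply: ler0n.
have := mulr_ge0 (mulr_ge0 x0 x0) T0; nra.
Qed.

End Gen.

Section Law.
Variables (R : realType) (p : R).

Fixpoint Lw (s t : seq bool) : R :=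
  match s with
  | [::] => (t == [::])%:R
  | c :: s' => p * Lw s' t +
      (1 - p) * (if t is d :: t' then (d == c)%:R * Lw s' t' else 0)
  end.

Definition ffcons n (b : bool) (m : {ffun 'I_n -> bool}) : {ffun 'I_n.+1 -> bool} :=
  [ffun i => if unlift ord0 i is Some j then m j else b].

Lemma sum_ffS n (H : {ffun 'I_n.+1 -> bool} -> R) :
  \sum_m H m = \sum_(b : bool) \sum_(m : {ffun 'I_n -> bool}) H (ffcons b m).
Proof.
rewrite pair_big /=.
rewrite (reindex (fun bm : bool * {ffun 'I_n -> bool} => ffcons bm.1 bm.2)) //=.
exists (fun m : {ffun 'I_n.+1 -> bool} => (m ord0, [ffun j => m (lift ord0 j)])).
  move=> [b m] _ /=; congr (_, _); first by rewrite ffunE unlift_none.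
  by apply/ffunP => j; rewrite !ffunE liftK.
move=> m _ /=; apply/ffunP => i; rewrite ffunE.
by case: unliftP => [j ->|->]; rewrite ?ffunE.
Qed.

Lemma mp_cons n b (m : {ffun 'I_n -> bool}) :
  mask_prob p (ffcons b m) = (if b then 1 - p else p) * mask_prob p m.
Proof.
rewrite /mask_prob big_ord_recl /= ffunE unlift_none; congr (_ * _).
by apply: eq_bigr => i _; rewrite ffunE liftK.
Qed.

Lemma tr_cons n (s : n.-tuple bool) c b (m : {ffun 'I_n -> bool}) :
  trace_of [tuple of c :: s] (ffcons b m) =
  if b then c :: trace_of s m else trace_of s m.
Proof.
rewrite /trace_of enum_ordSl /= ffunE unlift_none -map_comp.
have -> : [seq (ffcons b m \o lift ord0) i | i <- enum 'I_n] = [seq m i | i <- enum 'I_n].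
  by apply: eq_map => i /=; rewrite ffunE liftK.
by case: b.
Qed.

Lemma law n (s : n.-tuple bool) t :
  \sum_m mask_prob p m * (trace_of s m == t)%:R = Lw s t.
Proof.
elim: n s t => [|n IH] s t.
  rewrite tuple0 /=.
  have -> : \sum_(m : {ffun 'I_0 -> bool}) mask_prob p m * (trace_of [tuple] m == t)%:R
      = \sum_(m : {ffun 'I_0 -> bool}) (([::] : seq bool) == t)%:R.
    apply: eq_bigr => m _; rewrite /mask_prob big_ord0 mul1r /trace_of /=.
    by case: (map _ _).
  by rewrite sumr_const card_ffun card_ord /= eq_sym.
case/tupleP: s => c s.
rewrite sum_ffS big_bool /=.
under eq_bigr => m _ do rewrite mp_cons tr_cons -mulrA.
under [X in _ + X]eq_bigr => m _ do rewrite mp_cons tr_cons -mulrA.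
rewrite -!mulr_sumr IH addrC; congr (_ + _).
case: t => [|d t].
  by rewrite big1 ?mulr0 // => m _; rewrite mulr0.
congr (_ * _).
under eq_bigr => m _ do rewrite eqseq_cons.
rewrite eq_sym; case: (d == c); last by rewrite mul0r big1 // => m _; rewrite mulr0.
by rewrite mul1r IH.
Qed.

Definition Bin N x : R := 'C(N, x)%:R * (1 - p) ^+ x * p ^+ (N - x).

Lemma Bin0 x : Bin 0 x = (x == 0)%:R.
Proof. by case: x => [|x]; rewrite /Bin ?bin0 ?bin0n /=; ring. Qed.

Lemma Bin0S N : Bin N.+1 0 = p * Bin N 0.
Proof. rewrite /Bin !bin0 !subn0 exprS; ring. Qed.

Lemma BinS N x : Bin N.+1 x.+1 = p * Bin N x.+1 + (1 - p) * Bin N x.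
Proof.
rewrite /Bin binS natrD subSS.
have [lt|ge] := ltnP x N.
  have e : (N - x = (N - x.+1).+1)%N by lia.
  rewrite e !exprS; ring.
rewrite (bin_small (n:=N)) ?ltnS // exprS; ring.
Qed.

Lemma Lw1 b x y :
  Lw (nseq b true) (nseq x false ++ nseq y true) = Bin 0 x * Bin b y.
Proof.
elim: b x y => [|b IH] x y.
  rewrite /= !Bin0; case: x => [|x]; case: y => [|y] //=; rewrite ?mulr0 ?mul0r //.
  by rewrite /Bin /= !mulr1.
case: x => [|x] /=.
  case: y => [|y] /=.
    have := IH 0 0 => /= ->; rewrite Bin0S mulr0 addr0; ring.
  have := IH 0 y.+1 => /= ->; have := IH 0 y => /= ->.
  rewrite BinS; ring.
have := IH x.+1 y => /= ->; rewrite !Bin0 /=; ring.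
Qed.

Lemma Lw_blk a b x y :
  Lw (nseq a false ++ nseq b true) (nseq x false ++ nseq y true) = Bin a x * Bin b y.
Proof.
elim: a x y => [|a IH] x y; first exact: Lw1.
case: x => [|x] /=.
  case: y => [|y] /=.
    have := IH 0 0 => /= ->; rewrite Bin0S mulr0 addr0; ring.
  have := IH 0 y.+1 => /= ->; rewrite Bin0S /=; ring.
have := IH x.+1 y => /= ->; have := IH x y => ->.
rewrite ?mul1r BinS; ring.
Qed.

Hypothesis p01 : 0 < p < 1.

Lemma Bin_gt0 N x : (x <= N)%N -> 0 < Bin N x.
Proof.
move=> le; rewrite /Bin; case/andP: p01 => p0 p1.
apply: mulr_gt0; first apply: mulr_gt0.
- by rewrite ltr0n bin_gt0.
- by apply: exprn_gt0; lra.
- exact: exprn_gt0.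
Qed.

Lemma Bin_small N x : (N < x)%N -> Bin N x = 0.
Proof. by move=> lt; rewrite /Bin bin_small // mul0r mul0r. Qed.

Lemma sum_Bin N K : (N < K)%N -> \sum_(x < K) Bin N x = 1.
Proof.
elim: K => // K IH; rewrite ltnS leq_eqVlt => /orP [/eqP <-| lt].
  have : (p + (1 - p)) ^+ N = 1 by rewrite addrC subrK expr1n.
  rewrite exprDn => <-; apply: eq_bigr => i _; rewrite /Bin -mulr_natl; ring.
by rewrite big_ord_recr /= IH // Bin_small // addr0.
Qed.

Lemma key_id N x : Bin N.+1 x * (N.+1 - x)%:R = N.+1%:R * p * Bin N x.
Proof.
have [le|lt] := leqP x N.
  have h := congr1 (fun k => k%:R : R) (mul_bin_down N.+1 x).
  rewrite /= !natrM in h.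
  rewrite /Bin subSn // exprS.
  have -> : 'C(N.+1, x)%:R * (1 - p) ^+ x * (p * p ^+ (N - x)) * (N - x).+1%:R =
    ((N.+1 - x)%:R * 'C(N.+1, x)%:R) * (1 - p) ^+ x * p ^+ (N - x) * p.
    by rewrite subSn //; ring.
  rewrite -h; ring.
have -> : (N.+1 - x = 0)%N by lia.
by rewrite (Bin_small (N:=N)) // ?natr0 !mulr0.
Qed.

Lemma mean N K : (N < K)%N -> \sum_(x < K) Bin N x * (N - x)%:R = N%:R * p.
Proof.
case: N => [|N] hK.
  by rewrite big1 ?mul0r // => i _; rewrite sub0n mulr0.
rewrite (eq_bigr (fun x : 'I_K => N.+1%:R * p * Bin N x)); last by move=> i _; rewrite key_id.
by rewrite -mulr_sumr sum_Bin ?mulr1 //; lia.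
Qed.

Lemma chi_bin N K : (N.+1 < K)%N ->
  \sum_(x < K) Bin N x ^+ 2 / Bin N.+1 x = 1 + (1 - p) / (N.+1%:R * p).
Proof.
move=> hK; case/andP: p01 => p0 p1.
have pn : p != 0 by apply: lt0r_neq0.
have Nn : 1 + N%:R != 0 :> R by rewrite addrC natr1 pnatr_eq0.
have cp : N.+1%:R * p != 0 by apply: lt0r_neq0; apply: mulr_gt0 => //; rewrite ltr0n.
rewrite (eq_bigr (fun x : 'I_K => Bin N x * (1 + (N - x)%:R) / (N.+1%:R * p))); last first.
  move=> i _; have [le|lt] := leqP i N; last by rewrite Bin_small // expr2 !mul0r.
  have B1 : Bin N.+1 i != 0 by apply: lt0r_neq0; apply: Bin_gt0; lia.
  have h := key_id N i.
  have e : (N.+1 - i)%:R = 1 + (N - i)%:R :> R by rewrite subSn // -addn1 natrD addrC.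
  rewrite e in h.
  have EX : Bin N i = Bin N.+1 i * (1 + (N - i)%:R) / (N.+1%:R * p).
    by rewrite h; field; rewrite pn Nn.
  by rewrite expr2 {1}EX; field; rewrite pn Nn B1.
rewrite -mulr_suml.
under eq_bigr => i _ do rewrite mulrDr mulr1.
rewrite big_split /= sum_Bin; last lia.
rewrite mean; last lia.
rewrite -natr1; field; by rewrite pn addrC Nn.
Qed.

Lemma sq_div (x : R) : x ^+ 2 / x = x.
Proof. by have [->|nz] := eqVneq x 0; [rewrite expr2 !mul0r | rewrite expr2 mulfK]. Qed.

End Law.

Lemma blk_size n a : (a <= n)%N -> size (nseq a false ++ nseq (n - a) true) == n.
Proof. by move=> h; rewrite size_cat !size_nseq subnKC. Qed.

Definition blk n a (H : (a <= n)%N) : n.-tuple bool := Tuple (blk_size H).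

Lemma mask_nseq' m k (x : bool) :
  mask m (nseq k x) = nseq (size (mask m (nseq k x))) x /\
  (size (mask m (nseq k x)) <= k)%N.
Proof.
split.
  by apply/all_pred1P; apply: all_mask; rewrite all_nseq /= eqxx orbT.
have := leq_count_mask predT m (nseq k x).
by rewrite !count_predT size_nseq.
Qed.

Lemma trace_blk n a (H : (a <= n)%N) (m : {ffun 'I_n -> bool}) :
  exists u v, [/\ trace_of (blk H) m = nseq u false ++ nseq v true,
     (u <= a)%N & (v <= n - a)%N].
Proof.
rewrite /trace_of /=.
set mm := [seq m i | i <- enum 'I_n].
have smm : size mm = n by rewrite size_map size_enum_ord.
rewrite -(cat_take_drop a mm) mask_cat; last by rewrite size_takel ?smm // size_nseq.
case: (mask_nseq' (take a mm) a false) => [e1 s1].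
case: (mask_nseq' (drop a mm) (n - a) true) => [e2 s2].
by exists (size (mask (take a mm) (nseq a false))),
  (size (mask (drop a mm) (nseq (n - a) true))); rewrite -e1 -e2.
Qed.

Definition dec K1 K2 (i : 'I_K1.+1 * 'I_K2.+1) : seq bool :=
  nseq i.1 false ++ nseq i.2 true.

Lemma cnt_dec u v : count negb (nseq u false ++ nseq v true) = u /\
  count id (nseq u false ++ nseq v true) = v.
Proof. by rewrite !count_cat !count_nseq /= mul1n mul0n addn0 mul1n. Qed.

Lemma dec_inj K1 K2 : injective (@dec K1 K2).
Proof.
move=> [i1 i2] [j1 j2]; rewrite /dec /= => e.
have [a1 a2] := cnt_dec i1 i2; have [b1 b2] := cnt_dec j1 j2.
rewrite e in a1 a2; congr (_, _); apply: val_inj => /=; congruence.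
Qed.

Definition trm K1 K2 n a (H : (a <= n)%N) (m : {ffun 'I_n -> bool}) :
  'I_K1.+1 * 'I_K2.+1 :=
  (inord (count negb (trace_of (blk H) m)), inord (count id (trace_of (blk H) m))).

Lemma trm_dec K1 K2 n a (H : (a <= n)%N) m :
  (a <= K1)%N -> (n - a <= K2)%N -> trace_of (blk H) m = dec (@trm K1 K2 n a H m).
Proof.
move=> h1 h2; have [u [v [e hu hv]]] := trace_blk H m.
rewrite /trm /dec /= e; have [-> ->] := cnt_dec u v.
by rewrite !inordK //; lia.
Qed.

Section Succ.
Variables (R : realType) (p : R).

Lemma nu K1 K2 n a (H : (a <= n)%N) i :
  (a <= K1)%N -> (n - a <= K2)%N ->
  \sum_m mask_prob p m * (@trm K1 K2 n a H m == i)%:R = Bin p a i.1 * Bin p (n - a) i.2.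
Proof.
move=> h1 h2.
rewrite -Lw_blk -(law p (blk H) (dec i)).
apply: eq_bigr => m _; congr (_ * (_ %:R)).
by rewrite (trm_dec H m h1 h2) (inj_eq (@dec_inj K1 K2)).
Qed.

Lemma succ_gen K1 K2 n a (H : (a <= n)%N) T (A : seq (seq bool) -> seq (seq bool)) D :
  (a <= K1)%N -> (n - a <= K2)%N ->
  \sum_(M : {ffun 'I_T -> {ffun 'I_n -> bool}})
     (\prod_(j < T) mask_prob p (M j)) *
     (perm_eq (A [seq trace_of (blk H) (M j) | j <- enum 'I_T]) D)%:R =
  \sum_(t : {ffun 'I_T -> 'I_K1.+1 * 'I_K2.+1})
     (\prod_(j < T) (Bin p a (t j).1 * Bin p (n - a) (t j).2)) *
     (perm_eq (A [seq dec (t j) | j <- enum 'I_T]) D)%:R.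
Proof.
move=> h1 h2.
pose F := fun t : {ffun 'I_T -> 'I_K1.+1 * 'I_K2.+1} =>
   (perm_eq (A [seq dec (t j) | j <- enum 'I_T]) D)%:R : R.
transitivity (\sum_(M : {ffun 'I_T -> {ffun 'I_n -> bool}})
     (\prod_(j < T) mask_prob p (M j)) * F [ffun j => @trm K1 K2 n a H (M j)]).
  apply: eq_bigr => M _; congr (_ * (_%:R)); congr (perm_eq (A _) D).
  by apply: eq_map => j; rewrite ffunE (trm_dec H _ h1 h2).
rewrite push; apply: eq_bigr => t _; congr (_ * _).
by apply: eq_bigr => j _; rewrite nu.
Qed.

End Succ.

Lemma sum_pair (R : realType) (K1 K2 : nat) (f : 'I_K1 -> R) (g : 'I_K2 -> R) :
  \sum_(i : 'I_K1 * 'I_K2) f i.1 * g i.2 = (\sum_x f x) * (\sum_y g y).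
Proof.
rewrite -(pair_bigA _ (fun x y => f x * g y)) /= big_distrl; apply: eq_bigr => x _; by rewrite big_distrr.
Qed.

Lemma sum_pair2 (R : realType) (K1 K2 : nat) (f1 f2 : 'I_K1 -> R) (g1 g2 : 'I_K2 -> R) :
  \sum_(i : 'I_K1 * 'I_K2) (f1 i.1 * g1 i.2) ^+ 2 / (f2 i.1 * g2 i.2) =
  (\sum_x f1 x ^+ 2 / f2 x) * (\sum_y g1 y ^+ 2 / g2 y).
Proof.
rewrite -sum_pair; apply: eq_bigr => i _; rewrite exprMn invfM; ring.
Qed.

Lemma Bin_ge0 (R : realType) (p : R) N x : 0 < p < 1 -> 0 <= Bin p N x.
Proof.
move=> /andP [p0 p1]; rewrite /Bin; apply: mulr_ge0; first apply: mulr_ge0.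
- by rewrite ler0n.
- by apply: exprn_ge0; lra.
- by apply: exprn_ge0; lra.
Qed.

Lemma cmp_chi (R : realType) (p : R) (n m : nat) : 0 < p < 1 -> (0 < n)%N ->
  (n <= 2 * m)%N -> (1 - p) / (m%:R * p) <= 2 * (1 - p) / (n%:R * p).
Proof.
move=> /andP [p0 p1] n0 nm.
have m0 : (0 < m)%N by lia.
have mp : 0 < m%:R * p by apply: mulr_gt0; rewrite ?ltr0n.
have np : 0 < n%:R * p by apply: mulr_gt0; rewrite ?ltr0n.
rewrite ler_pdivlMr // mulrAC ler_pdivrMr //.
have : n%:R <= 2 * m%:R :> R by rewrite -natrM ler_nat.
move=> h; have q0 : 0 <= 1 - p by lra.
have h3 : 0 <= 2 * m%:R - n%:R :> R by lra.
have := mulr_ge0 (mulr_ge0 q0 (ltW p0)) h3; nra.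
Qed.


Lemma cmp_pow (R : realType) (p : R) (n m T : nat) : 0 < p < 1 -> (0 < n)%N ->
  (n <= 2 * m)%N ->
  (1 + (1 - p) / (m%:R * p)) ^+ T <= (1 + 2 * (1 - p) / (n%:R * p)) ^+ T.
Proof.
move=> p01 n0 nm; have l := cmp_chi p01 n0 nm.
case/andP: p01 => p0 p1.
have g : 0 <= (1 - p) / (m%:R * p).
  by apply: divr_ge0; [lra | apply: mulr_ge0; [apply: ler0n | lra]].
by apply: lerXn2r; rewrite ?nnegrE; lra.
Qed.

Lemma final_arith (R : realType) (p S1 SW G S2 e1 e2 : R) (n T : nat) :
  0 < p < 1 -> (0 < n)%N -> 2 / 3 <= S1 -> 2 / 3 <= S2 -> G + S2 <= 1 ->
  (S1 - SW) ^+ 2 <= e1 ^+ T - 1 -> (G - SW) ^+ 2 <= e2 ^+ T - 1 ->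
  e1 ^+ T <= (1 + 2 * (1 - p) / (n%:R * p)) ^+ T ->
  e2 ^+ T <= (1 + 2 * (1 - p) / (n%:R * p)) ^+ T ->
  1 / 74 * n%:R * p * (1 - p) <= T%:R.
Proof.
move=> /andP [p0 p1] n0 hS1 hS2 hG c1 c2 P1 P2.
set chi := 2 * (1 - p) / (n%:R * p) in P1 P2.
have np : 0 < n%:R * p by apply: mulr_gt0; rewrite ?ltr0n.
have chi0 : 0 <= chi by apply: divr_ge0; [lra | exact: ltW].
set E := (1 + chi) ^+ T in P1 P2.
have E36 : 37 / 36 <= E.
  have c1' : (S1 - SW) ^+ 2 <= E - 1 by lra.
  have c2' : (G - SW) ^+ 2 <= E - 1 by lra.
  clear c1 c2 P1 P2.
  set x := S1 - SW in c1'; set y := G - SW in c2'.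
  have hxy : 1 / 3 <= x - y by rewrite /x /y; lra.
  clearbody x y; clear hS1 hS2 hG.
  have := sqr_ge0 (x + y); nra.
have B := bern T chi0 (_ : chi + 1 >= 0).
have Y : 1 / 37 <= T%:R * chi.
  have E0 : 0 < E by lra.
  rewrite leNgt; apply/negP => h.
  have h2 : 36 / 37 < 1 - T%:R * chi by lra.
  have B' : E * (1 - T%:R * chi) <= 1 by apply: B; lra.
  clearbody E; clear B c1 c2 P1 P2.
  nra.
have hY : T%:R * chi * (n%:R * p) = 2 * T%:R * (1 - p).
  rewrite /chi; field; apply/andP; split; [lra | by rewrite pnatr_eq0 -lt0n].
clearbody chi.
have h1 : n%:R * p / 37 <= 2 * T%:R * (1 - p).
  have := ler_wpM2r (ltW np) Y; rewrite hY; lra.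
have T0 : 0 <= T%:R :> R by apply: ler0n.
have q0 : 0 <= 1 - p by lra.
have h3 := ler_wpM2r q0 h1.
have h4 : (1 - p) * (1 - p) <= 1 by nra.
clear c1 c2 P1 P2 B.
nra.
Qed.

Unset Implicit Arguments.

Theorem theorem3 (R : realType) :
  exists c : R, 0 < c /\
    forall (p : R) (g : nat -> nat),
      0 < p < 1 ->
      (forall n, (2 <= g n)%N) ->
      forall (n T : nat) (A : seq (seq bool) -> seq (seq bool)),
        (g n <= n)%N ->
        (forall s : n.-tuple bool, 2 / 3 <= success_prob p T (g n) A s) ->
        c * n%:R * p * (1 - p) <= T%:R.
Proof.
exists (1 / 74); split; first by rewrite divr_gt0.
move=> p g p01 g2 n T A hgn hs.
have k2 := g2 n; set k := g n in k2 hgn hs.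
have [p0 p1] : 0 < p /\ p < 1 by case/andP: p01.
set a := n./2.
have eo : (odd n + (a + a) = n)%N by rewrite addnn odd_double_half.
have o1 : (odd n <= 1)%N by case: (odd n).
have H1 : (a <= n)%N by lia.
have H2 : (a.+1 <= n)%N by lia.
have eb : (n - a = (n - a.+1).+1)%N by lia.
have n0 : (0 < n)%N by lia.
have hn1 : (n <= 2 * a.+1)%N by lia.
have hn2 : (n <= 2 * (n - a.+1).+1)%N by lia.
have hk : (0 < k <= n)%N by lia.
have hb1 : (n - a.+1 <= n - a)%N by lia.
have hb2 : (a < n)%N by lia.
clear eo o1.
have hs1 := hs (blk H1); have hs2 := hs (blk H2).
rewrite /success_prob (@succ_gen R p a.+1 (n - a)) // in hs1.
rewrite /success_prob (@succ_gen R p a.+1 (n - a)) // in hs2.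
set D1 := deck k _ in hs1; set D2 := deck k _ in hs2.
set v1 := fun i : 'I_a.+2 * 'I_(n - a).+1 => Bin p a i.1 * Bin p (n - a) i.2.
set v2 := fun i : 'I_a.+2 * 'I_(n - a).+1 => Bin p a.+1 i.1 * Bin p (n - a.+1) i.2.
set w := fun i : 'I_a.+2 * 'I_(n - a).+1 => Bin p a.+1 i.1 * Bin p (n - a) i.2.
pose F1 := fun t : {ffun 'I_T -> 'I_a.+2 * 'I_(n - a).+1} =>
   (perm_eq (A [seq dec (t j) | j <- enum 'I_T]) D1)%:R : R.
pose F2 := fun t : {ffun 'I_T -> 'I_a.+2 * 'I_(n - a).+1} =>
   (perm_eq (A [seq dec (t j) | j <- enum 'I_T]) D2)%:R : R.
have sv1 : \sum_i v1 i = 1.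
  by rewrite (sum_pair (fun x => Bin p a x) (fun y => Bin p (n - a) y)) !sum_Bin ?mulr1 // ltnS // leqnSn.
have sv2 : \sum_i v2 i = 1.
  by rewrite (sum_pair (fun x => Bin p a.+1 x) (fun y => Bin p (n - a.+1) y)) !sum_Bin ?mulr1 // ltnS // leqnSn.
have sw : \sum_i w i = 1.
  by rewrite (sum_pair (fun x => Bin p a.+1 x) (fun y => Bin p (n - a) y)) !sum_Bin ?mulr1 // ltnS // leqnSn.
have wpos i : 0 < w i.
  apply: mulr_gt0; apply: Bin_gt0 => //; case: i => [x y] /=.
    by have := ltn_ord x.
  by have := ltn_ord y.
have Fb1 t : 0 <= F1 t <= 1 by rewrite /F1; case: perm_eq; rewrite ?ler01 ?lexx.
have Fb2 t : 0 <= F2 t <= 1 by rewrite /F2; case: perm_eq; rewrite ?ler01 ?lexx.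
have D12 : ~~ perm_eq D1 D2 by apply: deck_neq.
have F12 t : F1 t + F2 t <= 1.
  rewrite /F1 /F2; case E1: (perm_eq _ D1); case E2: (perm_eq _ D2) => //=;
    rewrite ?addr0 ?add0r ?lexx //.
  have : perm_eq D1 D2 by apply: (perm_trans _ E2); rewrite perm_sym E1.
  by rewrite (negbTE D12).
set S1 := \sum_(t : {ffun 'I_T -> 'I_a.+2 * 'I_(n - a).+1}) (\prod_j v1 (t j)) * F1 t.
set S2 := \sum_(t : {ffun 'I_T -> 'I_a.+2 * 'I_(n - a).+1}) (\prod_j v2 (t j)) * F2 t.
set G := \sum_(t : {ffun 'I_T -> 'I_a.+2 * 'I_(n - a).+1}) (\prod_j v2 (t j)) * F1 t.
set SW := \sum_(t : {ffun 'I_T -> 'I_a.+2 * 'I_(n - a).+1}) (\prod_j w (t j)) * F1 t.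
have hS1 : 2 / 3 <= S1 by [].
have hS2 : 2 / 3 <= S2 by [].
have hG : G + S2 <= 1.
  rewrite /G /S2 -big_split /=.
  apply: (@le_trans _ _ (\sum_(t : {ffun 'I_T -> 'I_a.+2 * 'I_(n - a).+1}) \prod_j v2 (t j))); last first.
    by rewrite sum_prod_ffun sv2 expr1n.
  apply: ler_sum => t _; rewrite -mulrDr -[X in _ <= X]mulr1; apply: ler_wpM2l.
    by apply: prodr_ge0 => j _; apply: mulr_ge0; apply: Bin_ge0.
  exact: F12.
have c1 : (S1 - SW) ^+ 2 <= (\sum_i v1 i ^+ 2 / w i) ^+ T - 1.
  by have := @chi_bound R 'I_T _ v1 w F1 wpos sw sv1 Fb1; rewrite card_ord.
have c2 : (G - SW) ^+ 2 <= (\sum_i v2 i ^+ 2 / w i) ^+ T - 1.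
  by have := @chi_bound R 'I_T _ v2 w F1 wpos sw sv2 Fb1; rewrite card_ord.
have X1 : \sum_i v1 i ^+ 2 / w i = 1 + (1 - p) / (a.+1%:R * p).
  rewrite (sum_pair2 (fun x => Bin p a x) (fun x => Bin p a.+1 x)
     (fun y => Bin p (n - a) y) (fun y => Bin p (n - a) y)).
  rewrite chi_bin //.
  under eq_bigr do rewrite sq_div.
  by rewrite sum_Bin // mulr1.
have X2 : \sum_i v2 i ^+ 2 / w i = 1 + (1 - p) / ((n - a.+1).+1%:R * p).
  rewrite (sum_pair2 (fun x => Bin p a.+1 x) (fun x => Bin p a.+1 x)
     (fun y => Bin p (n - a.+1) y) (fun y => Bin p (n - a) y)).
  under eq_bigr do rewrite sq_div.
  rewrite sum_Bin // mul1r.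
  rewrite eb chi_bin //.
rewrite X1 in c1; rewrite X2 in c2.
apply: (final_arith p01 n0 hS1 hS2 hG c1 c2).
  by apply: cmp_pow.
by apply: cmp_pow.
Qed.
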